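(* Let $k$ be a finite field of odd characteristic, $A$ a finite $k$-algebra with involution $*$ fixing $k$ pointwise, $(S,\eta)$ a self-dual $A$-module, $W=S\oplus S$ with symplectic form $B$ and $\chi=\psi\circ B$, and let $\mathcal L$, $\mathcal E_L$ be as in the context. For $L,L'\in\mathcal L$ define $\gamma_{L',L}$ on $\mathcal E_L$ by $$(\gamma_{L',L}f)(w)=\frac{1}{\sqrt{|L|\,|L\cap L'|}}\sum_{\zeta'\in L'}\overline{\chi(w,\zeta')}\,f(w+\zeta')\qquad(f\in\mathcal E_L,\ w\in W).$$ Then $\gamma_{L',L}$ maps $\mathcal E_L$ into $\mathcal E_{L'}$, and for all $L,L',L''\in\mathcal L$: (a) $\langle\gamma_{L',L}f,h\rangle=\langle f,\gamma_{L,L'}h\rangle$ for $f\in\mathcal E_L$, $h\in\mathcal E_{L'}$; (b) $\langle\gamma_{L',L}f,\gamma_{L',L}h\rangle=\langle f,h\rangle$ for $f,h\in\mathcal E_L$; (c) $\gamma_{L,L'}\circ\gamma_{L',L}=\gamma_{L,L}=\mathrm{id}_{\mathcal E_L}$; (d) $\gamma_{L'',L'}\circ\gamma_{L',L}=\mu(L'',L',L)\,\gamma_{L'',L}$, where $$\mu(L'',L',L)=\sqrt{\frac{|L''\cap L'|}{|L\cap L''|\,|L'\cap L|\,|L|}}\;S_W(L;L',L''),\qquad S_W(L;L',L'')=\sum_{\zeta\in L\cap(L'+L'')}\chi(\zeta',\zeta''),$$ in which each $\zeta\in L\cap(L'+L'')$ is written as $\zeta=\zeta'+\zeta''$ with $\zeta'\in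 L'$, $\zeta''\in L''$ (the summand does not depend on this choice); (e) $\tau_g\circ\gamma_{L',L}=\gamma_{gL',gL}\circ\tau_g$ for every $g\in G$. Consequently $\Gamma=\{\gamma_{L',L}\}$ is a $G$-equivariant connection on the Lagrangian bundle with multiplier $\mu$.
   Context: A self-dual $A$-module is a left $A$-module $S$, finite-dimensional over $k$, together with a non-degenerate, $k$-bilinear, symmetric, $A$-balanced pairing $\eta:S\times S\to k$ ($A$-balanced: $\eta(a^*s,t)=\eta(s,at)$ for $a\in A$, $s,t\in S$). $S$ is a right $A$-module via $s.a=a^*s$, and $W=S\oplus S$ is a right $A$-module componentwise. $B((s,t),(s',t'))=\eta(s,t')-\eta(t,s')$ is a non-degenerate symplectic $k$-form on $W$. Fix a non-trivial character $\psi$ of $(k,+)$ and put $\chi(u,v)=\psi(B(u,v))$ for $u,v\in W$. A Lagrangian is a right $A$-submodule $L\subseteq W$ with $L=L^\perp$ (orthogonal with respect to $B$); $\mathcal L$ is the set of Lagrangians. For $L\in\mathcal L$, $\mathcal E_L=\{f:W\to\mathbb C\mid f(w+\zeta)=\chi(w,\zeta)f(w)\ \forall w\in W,\zeta\in L\}$ with inner product $\langle f,h\rangle=\sum_{w\in W}f(w)\overline{h(w)}$. $G=SL_*(2,A)$ (matrices $\begin{pmatrix}a&b\\c&d\end{pmatrix}$ over $A$ with $ab^*=ba^*$, $cd^*=dc^*$, $a^*c=c^*a$, $b^*d=d^*b$, $ad^*-bc^*=a^*d-c^*b=1$) acts on $W$, written $w\mapsto gw$, either by $gw=g.w$ (matrix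 times column vector, $g.(s,t)=(as+bt,cs+dt)$) or by $gw=w.g^{-1}$ (row vector times matrix); this action preserves $B$, and it is assumed (as in the paper) to map Lagrangians to Lagrangians, $gL=\{gw:w\in L\}$. The action on functions is $(\tau_gf)(w)=f(g^{-1}w)$, so $\tau_g:\mathcal E_L\to\mathcal E_{gL}$. *)

(* Defs.v *)
From HB Require Import structures.
From mathcomp Require Import all_boot all_order all_algebra all_field.
Set Implicit Arguments. Unset Strict Implicit. Unset Printing Implicit Defensive.
Import Order.TTheory GRing.Theory Num.Theory.
Local Open Scope ring_scope.

(* Conventions:
   - k : finFieldType, A : finAlgType k (a finite k-algebra, possibly
     non-commutative), star : A -> A the involution.
   - S : finLmodType A is the left A-module S (finite, hence finite-dim over k;
     k acts through c%:A).  eta : S -> S -> k.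
   - W := S * S, with componentwise zmodType structure.
   - psi : k -> algC is the additive character (values in algebraic complex
     numbers, which contain all character values). *)

Section Weil.
Variables (k : finFieldType) (A : finAlgType k) (star : A -> A).
Variable (S : finLmodType A).
Variable (eta : S -> S -> k).
Variable (psi : k -> algC).

Definition is_involution : Prop :=
  [/\ forall x y : A, star (x + y) = star x + star y,
      forall x y : A, star (x * y) = star y * star x,
      forall x : A, star (star x) = x
    & forall c : k, star (c%:A) = c%:A].

Definition self_dual : Prop :=
  (forall s s' t : S, eta (s + s') t = eta s t + eta s' t) /\
  (forall s t t' : S, eta s (t + t') = eta s t + eta s t') /\
  (forall (c : k) (s t : S), eta (c%:A *: s) t = c * eta s t) /\
  (forall (c : k) (s t : S), eta s (c%:A *: t) = c * eta s t) /\
  (forall s t : S, eta s t = eta t s) /\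
  (forall s : S, (forall t : S, eta s t = 0) -> s = 0) /\
  (forall (a : A) (s t : S), eta (star a *: s) t = eta s (a *: t)).

Definition nontrivial_character : Prop :=
  [/\ forall x y : k, psi (x + y) = psi x * psi y,
      forall x : k, psi x != 0
    & exists x : k, psi x != 1].

Definition W := (S * S)%type.

(* right A-module structure s.a = a^* s, componentwise *)
Definition ract (w : W) (a : A) : W := (star a *: w.1, star a *: w.2).

Definition B (u v : W) : k := eta u.1 v.2 - eta u.2 v.1.

Definition chi (u v : W) : algC := psi (B u v).

Definition orth (L : {set W}) : {set W} :=
  [set w : W | [forall z in L, B w z == 0]].

Definition right_submodule (L : {set W}) : bool :=
  [&& (0 : W) \in L,
      [forall u in L, forall v in L, u + v \in L]
    & [forall u in L, forall a : A, ract u a \in L]].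

Definition lagrangian (L : {set W}) : bool :=
  right_submodule L && (L == orth L).

Definition in_EL (L : {set W}) (f : W -> algC) : Prop :=
  forall w z : W, z \in L -> f (w + z) = chi w z * f w.

Definition ip (f h : W -> algC) : algC := \sum_(w : W) f w * (h w)^*.

Definition gamma (L' L : {set W}) (f : W -> algC) (w : W) : algC :=
  (sqrtC ((#|L| * #|L :&: L'|)%:R))^-1 *
    \sum_(z in L') (chi w z)^* * f (w + z).

Definition sumset (L' L'' : {set W}) : {set W} :=
  [set z : W | [exists p : W * W, [&& p.1 \in L', p.2 \in L'' & z == p.1 + p.2]]].

Definition SW_term (L' L'' : {set W}) (z : W) : algC :=
  if [pick p : W * W | [&& p.1 \in L', p.2 \in L'' & z == p.1 + p.2]] is Some p
  then chi p.1 p.2 else 0.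

Definition SW (L L' L'' : {set W}) : algC :=
  \sum_(z in L :&: sumset L' L'') SW_term L' L'' z.

Definition mu (L'' L' L : {set W}) : algC :=
  sqrtC (#|L'' :&: L'|%:R / (#|L :&: L''| * #|L' :&: L| * #|L|)%:R)
    * SW L L' L''.

Definition m11 (g : 'M[A]_2) := g ord0 ord0.
Definition m12 (g : 'M[A]_2) := g ord0 ord_max.
Definition m21 (g : 'M[A]_2) := g ord_max ord0.
Definition m22 (g : 'M[A]_2) := g ord_max ord_max.

Definition SLstar (g : 'M[A]_2) : Prop :=
  let a := m11 g in let b := m12 g in let c := m21 g in let d := m22 g in
  [/\ a * star b = b * star a, c * star d = d * star c,
      star a * c = star c * a, star b * d = star d * b &
      a * star d - b * star c = 1 /\ star a * d - star c * b = 1].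

(* matrix [[a,b],[c,d]] times column vector (s,t) *)
Definition matL (a b c d : A) (w : W) : W :=
  (a *: w.1 + b *: w.2, c *: w.1 + d *: w.2).
(* row vector (s,t) times matrix [[a,b],[c,d]], with s.x = x^* s *)
Definition matR (a b c d : A) (w : W) : W :=
  (star a *: w.1 + star c *: w.2, star b *: w.1 + star d *: w.2).

(* For g = [[a,b],[c,d]] in SL_*(2,A), g^{-1} = [[d^*,-b^*],[-c^*,a^*]]. *)
(* action 1: g w = g.w ; action 2: g w = w.g^{-1} *)
Definition act1 (g : 'M[A]_2) (w : W) : W := matL (m11 g) (m12 g) (m21 g) (m22 g) w.
Definition act1inv (g : 'M[A]_2) (w : W) : W :=
  matL (star (m22 g)) (- star (m12 g)) (- star (m21 g)) (star (m11 g)) w.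
Definition act2 (g : 'M[A]_2) (w : W) : W :=
  matR (star (m22 g)) (- star (m12 g)) (- star (m21 g)) (star (m11 g)) w.
Definition act2inv (g : 'M[A]_2) (w : W) : W := matR (m11 g) (m12 g) (m21 g) (m22 g) w.

Definition tau (ginv : W -> W) (f : W -> algC) (w : W) : algC := f (ginv w).

Definition equivariant (act actinv : 'M[A]_2 -> W -> W) : Prop :=
  (forall g, SLstar g -> forall L, lagrangian L -> lagrangian (act g @: L)) ->
  forall g, SLstar g ->
  forall L L', lagrangian L -> lagrangian L' ->
  forall f, in_EL L f ->
  forall w, tau (actinv g) (gamma L' L f) w
            = gamma (act g @: L') (act g @: L) (tau (actinv g) f) w.

End Weil.

(* Main.v *)
Require Import Defs.
From HB Require Import structures.
From mathcomp Require Import all_boot all_order all_algebra all_field.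
Set Implicit Arguments. Unset Strict Implicit. Unset Printing Implicit Defensive.
Import Order.TTheory GRing.Theory Num.Theory.
Local Open Scope ring_scope.

Lemma addf0 (U V : zmodType) (g : U -> V) :
  (forall x y, g (x + y) = g x + g y) -> g 0 = 0.
Proof. by move=> gD; apply/(addrI (g 0)); rewrite -gD !addr0. Qed.

Lemma addfN (U V : zmodType) (g : U -> V) :
  (forall x y, g (x + y) = g x + g y) -> forall x, g (- x) = - g x.
Proof.
move=> gD x; apply/eqP; rewrite -addr_eq0 -gD addNr; exact/eqP/addf0.
Qed.

Section Dev.
Variables (k : finFieldType) (A : finAlgType k) (star : A -> A).
Variables (S : finLmodType A) (eta : S -> S -> k) (psi : k -> algC).
Hypothesis k_odd : ~~ (2 \in [pchar k]).
Hypothesis Hstar : is_involution star.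
Hypothesis Heta : self_dual star eta.
Hypothesis Hpsi : nontrivial_character psi.

Local Notation WW := (W S).
Local Notation BB := (B eta).
Local Notation ch := (chi eta psi).

Definition scl (c : k) (w : WW) : WW := (c%:A *: w.1, c%:A *: w.2).

Lemma etaDl s s' t : eta (s + s') t = eta s t + eta s' t.
Proof. by case: Heta => [H _]; apply: H. Qed.
Lemma etaDr s t t' : eta s (t + t') = eta s t + eta s t'.
Proof. by case: Heta => _ [H _]; apply: H. Qed.
Lemma etaZl c s t : eta (c%:A *: s) t = c * eta s t.
Proof. by case: Heta => _ [_ [H _]]; apply: H. Qed.
Lemma etaZr c s t : eta s (c%:A *: t) = c * eta s t.
Proof. by case: Heta => _ [_ [_ [H _]]]; apply: H. Qed.
Lemma etaC s t : eta s t = eta t s.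
Proof. by case: Heta => _ [_ [_ [_ [H _]]]]; apply: H. Qed.
Lemma eta_nd s : (forall t, eta s t = 0) -> s = 0.
Proof. by case: Heta => _ [_ [_ [_ [_ [H _]]]]]; apply: H. Qed.
Lemma eta_bal a s t : eta (star a *: s) t = eta s (a *: t).
Proof. by case: Heta => _ [_ [_ [_ [_ [_ H]]]]]; apply: H. Qed.
Lemma etaNl s t : eta (- s) t = - eta s t.
Proof. by apply: (@addfN _ _ (eta^~ t)) => x y; exact: etaDl. Qed.
Lemma etaNr s t : eta s (- t) = - eta s t.
Proof. by apply: (@addfN _ _ (eta s)) => x y; exact: etaDr. Qed.

Lemma starD x y : star (x + y) = star x + star y. Proof. by case: Hstar. Qed.
Lemma starM x y : star (x * y) = star y * star x. Proof. by case: Hstar. Qed.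
Lemma starK x : star (star x) = x. Proof. by case: Hstar. Qed.
Lemma starC c : star (c%:A) = c%:A. Proof. by case: Hstar. Qed.
Lemma starN x : star (- x) = - star x. Proof. exact: (addfN starD). Qed.
Lemma star1 : star 1 = 1. Proof. by have := starC 1; rewrite scale1r. Qed.
Lemma starB x y : star (x - y) = star x - star y. Proof. by rewrite starD starN. Qed.

Lemma BDl u u' v : BB (u + u') v = BB u v + BB u' v.
Proof. by rewrite /B /= !etaDl opprD addrACA. Qed.
Lemma BDr u v v' : BB u (v + v') = BB u v + BB u v'.
Proof. by rewrite /B /= !etaDr opprD addrACA. Qed.
Lemma BNl u v : BB (- u) v = - BB u v.
Proof. by apply: (@addfN _ _ (BB^~ v)) => x y; exact: BDl. Qed.
Lemma BNr u v : BB u (- v) = - BB u v.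
Proof. by apply: (@addfN _ _ (BB u)) => x y; exact: BDr. Qed.
Lemma B0l v : BB 0 v = 0.
Proof. by apply: (@addf0 _ _ (BB^~ v)) => x y; exact: BDl. Qed.
Lemma Bself u : BB u u = 0.
Proof. by rewrite /B etaC subrr. Qed.
Lemma Banti u v : BB v u = - BB u v.
Proof. by rewrite /B opprB (etaC v.1) (etaC v.2). Qed.
Lemma Bsclr c u v : BB u (scl c v) = c * BB u v.
Proof. by rewrite /B /= !etaZr mulrBr. Qed.
Lemma Bscll c u v : BB (scl c u) v = c * BB u v.
Proof. by rewrite /B /= !etaZl mulrBr. Qed.
Lemma B_nd v : (forall u, BB u v = 0) -> v = 0.
Proof.
case: v => x y H.
have hy : y = 0.
  apply: eta_nd => t; rewrite etaC.
  have e0 : eta 0 x = 0 by apply: (@addf0 _ _ (eta^~ x)) => a b; exact: etaDl.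
  by have := H (t, 0); rewrite /B /= e0 subr0.
have hx : x = 0.
  apply: eta_nd => t; rewrite etaC.
  have := H (0, t); rewrite /B /= hy.
  have e0 : eta 0 0 = 0 by apply: (@addf0 _ _ (eta^~ 0)) => a b; exact: etaDl.
  by rewrite e0 sub0r => /eqP; rewrite oppr_eq0 => /eqP.
by rewrite hx hy.
Qed.

Lemma psiD x y : psi (x + y) = psi x * psi y. Proof. by case: Hpsi. Qed.
Lemma psi_neq0 x : psi x != 0. Proof. by case: Hpsi. Qed.
Lemma psi0 : psi 0 = 1.
Proof. by apply: (mulfI (psi_neq0 0)); rewrite -psiD !addr0 mulr1. Qed.
Lemma psiN x : psi (- x) = (psi x)^-1.
Proof. by apply: (mulfI (psi_neq0 x)); rewrite -psiD subrr psi0 divff ?psi_neq0. Qed.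
Lemma psiMn x n : psi (x *+ n) = psi x ^+ n.
Proof. by elim: n => [|n IH]; rewrite ?mulr0n ?psi0 // mulrS exprS psiD IH. Qed.
Lemma psi_norm x : `|psi x| = 1.
Proof.
case: (finPcharP k) => p pp pc.
have : psi x ^+ p = 1 by rewrite -psiMn (mulrn_pchar pc) psi0.
move=> /(congr1 (fun z => `|z|)); rewrite normrX normr1 => /eqP.
by rewrite pexpr_eq1 ?prime_gt0 // => /eqP.
Qed.
Lemma psi_conj x : (psi x)^* = psi (- x).
Proof. by rewrite psiN invC_norm psi_norm expr1n invr1 mul1r. Qed.

Lemma chiDl u u' v : ch (u + u') v = ch u v * ch u' v.
Proof. by rewrite /chi BDl psiD. Qed.
Lemma chiDr u v v' : ch u (v + v') = ch u v * ch u v'.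
Proof. by rewrite /chi BDr psiD. Qed.
Lemma chi_conj u v : (ch u v)^* = ch v u.
Proof. by rewrite /chi psi_conj -Banti. Qed.
Lemma chiK u v : (ch u v)^* * ch u v = 1.
Proof. by rewrite /chi psi_conj -psiD addNr psi0. Qed.
Lemma chiKr u v : ch u v * (ch u v)^* = 1.
Proof. by rewrite mulrC chiK. Qed.
Lemma chi0 u v : BB u v = 0 -> ch u v = 1.
Proof. by rewrite /chi => ->; rewrite psi0. Qed.
Lemma chi_self u : ch u u = 1.
Proof. by rewrite chi0 ?Bself. Qed.


Definition ksub (M : {set WW}) : Prop :=
  [/\ (0 : WW) \in M, forall x y, x \in M -> y \in M -> x + y \in M,
      forall x, x \in M -> - x \in M & forall c x, x \in M -> scl c x \in M].

Lemma ksub_memD M z1 z : ksub M -> z1 \in M -> (z + z1 \in M) = (z \in M).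
Proof.
case=> _ hD hN _ h1; apply/idP/idP => h; last exact: hD.
by rewrite -(addrK z1 z); apply: hD => //; apply: hN.
Qed.

Lemma char_sum M w : ksub M ->
  \sum_(z in M) ch w z = if [forall z in M, BB w z == 0] then (#|M|%:R : algC) else 0.
Proof.
move=> hM; case: ifP => [/forallP H | /negbT/forallPn [z0]].
  apply: etrans (_ : \sum_(z in M) (1 : algC) = _); last by rewrite sumr_const.
  apply: eq_bigr => z zM; apply: chi0; apply/eqP; exact: (implyP (H z) zM).
rewrite negb_imply => /andP [z0M nz].
case: Hpsi => _ _ [x hx].
pose c := x / BB w z0.
have z1M : scl c z0 \in M by case: hM => _ _ _ ->.
have hB : BB w (scl c z0) = x by rewrite Bsclr /c divfK.
set s := \sum_(z in M) _.
have hs : s * ch w (scl c z0) = s.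
  rewrite /s big_distrl /= [RHS](reindex_inj (addIr (scl c z0))) /=.
  apply: eq_big => z; first by rewrite /= ksub_memD.
  by move=> _; rewrite chiDr.
have : s * (ch w (scl c z0) - 1) = 0 by rewrite mulrBr mulr1 hs subrr.
by move/eqP; rewrite mulf_eq0 subr_eq0 /chi hB (negbTE hx) orbF => /eqP.
Qed.

Lemma sum_chi_W z : \sum_(w : WW) ch w z = if z == 0 then (#|[set: WW]|%:R : algC) else 0.
Proof.
have kT : ksub [set: WW] by split=> *; rewrite in_setT.
transitivity ((\sum_(w in [set: WW]) ch z w)^*).
  rewrite rmorph_sum; apply: eq_big => w; rewrite ?in_setT // => _.
  by rewrite /= chi_conj.
rewrite char_sum //.
have -> : [forall w in [set: WW], BB z w == 0] = (z == 0).
  apply/idP/idP => [/forallP H | /eqP ->].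
  - apply/eqP/B_nd => u; rewrite Banti; apply/eqP; rewrite oppr_eq0.
    exact: (implyP (H u) (in_setT u)).
  - by apply/forallP => u; apply/implyP => _; rewrite B0l.
by case: (z == 0); rewrite ?conjC_nat ?conjC0.
Qed.

Lemma card_orth M : ksub M -> (#|M| * #|orth eta M|)%N = #|[set: WW]|.
Proof.
move=> hM; apply/eqP; rewrite -(eqr_nat algC) natrM; apply/eqP.
transitivity (\sum_(w : WW) \sum_(z in M) ch w z).
  rewrite (eq_bigr (fun w => if w \in orth eta M then (#|M|%:R : algC) else 0)); last first.
    by move=> w _; rewrite char_sum // /orth inE.
  by rewrite -big_mkcond sumr_const mulr_natr.
rewrite exchange_big /= (eq_bigr _ (fun z _ => sum_chi_W z)).
have h0 : (0 : WW) \in M by case: hM.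
rewrite (bigD1 _ h0) eqxx /=.
by rewrite big1 ?addr0 // => z /andP[_ /negbTE ->].
Qed.

Lemma lagE L : lagrangian star eta L -> L = orth eta L.
Proof. by case/andP => _ /eqP. Qed.

Lemma lagB L z z' : lagrangian star eta L -> z \in L -> z' \in L -> BB z z' = 0.
Proof.
move=> hL hz hz'; move: hz; rewrite {1}(lagE hL) /orth inE.
by move=> /forallP /(_ z') /implyP /(_ hz') /eqP.
Qed.

Lemma lag_mem L w : lagrangian star eta L -> (forall z, z \in L -> BB w z = 0) -> w \in L.
Proof.
move=> hL H; rewrite (lagE hL) /orth inE; apply/forallP => z; apply/implyP => hz.
exact/eqP/H.
Qed.

Lemma lag_ksub L : lagrangian star eta L -> ksub L.
Proof.
move=> hL; split.
- by apply: lag_mem => // z _; rewrite B0l.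
- by move=> x y hx hy; apply: lag_mem => // z hz; rewrite BDl (lagB hL hx hz) (lagB hL hy hz) addr0.
- by move=> x hx; apply: lag_mem => // z hz; rewrite BNl (lagB hL hx hz) oppr0.
- by move=> c x hx; apply: lag_mem => // z hz; rewrite Bscll (lagB hL hx hz) mulr0.
Qed.

Lemma card_lag L : lagrangian star eta L -> (#|L| * #|L|)%N = #|[set: WW]|.
Proof. by move=> hL; have := card_orth (lag_ksub hL); rewrite -(lagE hL). Qed.

Lemma card_lag_eq L L' : lagrangian star eta L -> lagrangian star eta L' -> #|L| = #|L'|.
Proof.
by move=> h h'; apply/eqP; rewrite -eqn_sqr -!mulnn (card_lag h) (card_lag h').
Qed.

Lemma ksubI (M N : {set WW}) : ksub M -> ksub N -> ksub (M :&: N).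
Proof.
case=> h0 hD hN hZ [h0' hD' hN' hZ']; split.
- by rewrite inE h0 h0'.
- by move=> x y; rewrite !inE => /andP[? ?] /andP[? ?]; rewrite hD ?hD'.
- by move=> x; rewrite !inE => /andP[? ?]; rewrite hN ?hN'.
- by move=> c x; rewrite !inE => /andP[? ?]; rewrite hZ ?hZ'.
Qed.

Lemma mem_sumset (M N : {set WW}) a b : a \in M -> b \in N -> a + b \in sumset M N.
Proof.
move=> ha hb; rewrite /sumset inE; apply/existsP; exists (a, b).
by rewrite /= ha hb eqxx.
Qed.

Lemma sumsetP (M N : {set WW}) z : z \in sumset M N -> exists a b, [/\ a \in M, b \in N & z = a + b].
Proof.
by rewrite /sumset inE => /existsP [[a b] /and3P [/= ha hb /eqP ->]]; exists a, b.
Qed.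

Lemma scl_add c u v : scl c (u + v) = scl c u + scl c v.
Proof. by rewrite /scl /= !scalerDr. Qed.

Lemma ksub_sumset (M N : {set WW}) : ksub M -> ksub N -> ksub (sumset M N).
Proof.
case=> h0 hD hN hZ [h0' hD' hN' hZ']; split.
- by rewrite -(addr0 0); apply: mem_sumset.
- move=> x y /sumsetP [a [b [ha hb ->]]] /sumsetP [a' [b' [ha' hb' ->]]].
  by rewrite addrACA; apply: mem_sumset; [apply: hD | apply: hD'].
- move=> x /sumsetP [a [b [ha hb ->]]].
  by rewrite opprD; apply: mem_sumset; [apply: hN | apply: hN'].
- move=> c x /sumsetP [a [b [ha hb ->]]].
  by rewrite scl_add; apply: mem_sumset; [apply: hZ | apply: hZ'].
Qed.

Lemma orth_sumset L L2 : lagrangian star eta L -> lagrangian star eta L2 ->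
  orth eta (sumset L L2) = L :&: L2.
Proof.
move=> hL hL2; apply/setP => w; rewrite /orth !inE.
apply/idP/idP => [/forallP H | /andP [hw hw2]].
- have HB z : z \in sumset L L2 -> BB w z = 0 by move=> hz; apply/eqP; exact: (implyP (H z) hz).
  apply/andP; split.
  + apply: lag_mem => // z hz; apply: HB; rewrite -(addr0 z); apply: mem_sumset => //.
    by case: (lag_ksub hL2).
  + apply: lag_mem => // z hz; apply: HB; rewrite -(add0r z); apply: mem_sumset => //.
    by case: (lag_ksub hL).
- apply/forallP => z; apply/implyP => /sumsetP [a [b [ha hb ->]]].
  by rewrite BDr (lagB hL hw ha) (lagB hL2 hw2 hb) addr0.
Qed.

Lemma orth_cap L L2 : lagrangian star eta L -> lagrangian star eta L2 ->
  orth eta (L :&: L2) = sumset L L2.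
Proof.
move=> hL hL2; apply/eqP; rewrite eq_sym eqEcard; apply/andP; split.
  apply/subsetP => z /sumsetP [a [b [ha hb ->]]]; rewrite /orth inE.
  apply/forallP => d; apply/implyP; rewrite inE => /andP[hdL hd2].
  by rewrite BDl (lagB hL ha hdL) (lagB hL2 hb hd2) addr0.
have kD := ksubI (lag_ksub hL) (lag_ksub hL2).
have h1 := card_orth kD.
have h2 := card_orth (ksub_sumset (lag_ksub hL) (lag_ksub hL2)).
rewrite orth_sumset // -h1 mulnC in h2.
have Dpos : (0 < #|L :&: L2|)%N by apply/card_gt0P; exists 0; case: kD.
by move/eqP: h2; rewrite eqn_pmul2l // => /eqP ->.
Qed.

Local Notation gm := (gamma eta psi).
Local Notation lag := (lagrangian star eta).
Local Notation EL := (in_EL eta psi).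

Lemma lag0 L : lag L -> (0 : WW) \in L.
Proof. by move=> hL; case: (lag_ksub hL). Qed.

Lemma lag_pos L : lag L -> (0 < #|L|)%N.
Proof. by move=> hL; apply/card_gt0P; exists 0; apply: lag0. Qed.

Lemma gamma_EL L L' f : lag L' -> EL L' (gm L' L f).
Proof.
move=> hL' w z0 hz0; rewrite /gamma mulrCA; congr (_ * _).
rewrite big_distrr /= [RHS](reindex_inj (addIr z0)) /=.
apply: eq_big => z; first by rewrite /= (ksub_memD _ (lag_ksub hL') hz0).
move=> hz; rewrite chiDl chiDr !rmorphM /= (chi0 (lagB hL' hz0 hz)) rmorph1 mulr1.
rewrite (addrC z z0) addrA.
by rewrite [RHS]mulrCA -mulrA [X in _ = _ * X]mulrA chiK mul1r.
Qed.

Lemma gamma_id L f : lag L -> EL L f -> forall w, gm L L f w = f w.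
Proof.
move=> hL hf w; rewrite /gamma setIid.
rewrite (eq_bigr (fun z => f w)); last by move=> z hz; rewrite hf // mulrA chiK mul1r.
rewrite sumr_const -(mulr_natl (f w)) mulrA natrM -expr2 sqrCK ?ler0n // mulVf ?mul1r //.
by rewrite pnatr_eq0 -lt0n lag_pos.
Qed.

Lemma ip_gamma L L' f h : lag L' -> EL L' h ->
  ip (gm L' L f) h = (sqrtC ((#|L| * #|L :&: L'|)%:R))^-1 * #|L'|%:R * ip f h.
Proof.
move=> hL' hh; rewrite /ip /gamma.
under eq_bigr do rewrite -mulrA.
rewrite -big_distrr -mulrA; congr (_ * _).
under eq_bigr do rewrite big_distrl.
rewrite exchange_big /= (eq_bigr (fun _ => \sum_w f w * (h w)^*)); last first.
  move=> z hz; rewrite [RHS](reindex_inj (addIr z)) /=; apply: eq_bigr => w _.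
  by rewrite hh // rmorphM /= mulrCA mulrA.
by rewrite sumr_const mulr_natl.
Qed.

Lemma ip_conj (f h : WW -> algC) : ip f h = (ip h f)^*.
Proof. by rewrite /ip rmorph_sum; apply: eq_bigr => w _; rewrite /= rmorphM /= conjCK mulrC. Qed.

Lemma partA L L' f h : lag L -> lag L' -> EL L f -> EL L' h ->
  ip (gm L' L f) h = ip f (gm L L' h).
Proof.
move=> hL hL' hf hh.
rewrite ip_gamma // [RHS]ip_conj ip_gamma // !rmorphM /= conjC_nat -ip_conj.
rewrite (geC0_conj (x := (sqrtC _)^-1)); last by rewrite invr_ge0 sqrtC_ge0 mulr_ge0 ?ler0n.
by rewrite (card_lag_eq hL hL') setIC.
Qed.

Lemma ip_eqr (f g g' : WW -> algC) : (forall w, g w = g' w) -> ip f g = ip f g'.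
Proof. by move=> e; apply: eq_bigr => w _; rewrite e. Qed.

Lemma SW_wd L1 L2 z1 z2 y1 y2 : lag L1 -> lag L2 -> z1 \in L1 -> z2 \in L2 ->
  y1 \in L1 -> y2 \in L2 -> z1 + z2 = y1 + y2 -> ch z1 z2 = ch y1 y2.
Proof.
move=> h1 h2 hz1 hz2 hy1 hy2 e.
have [_ kD1 kN1 _] := lag_ksub h1; have [_ kD2 kN2 _] := lag_ksub h2.
have hd1 : z1 - y1 \in L1 by apply: kD1 => //; apply: kN1.
have ey2 : y2 = (z1 - y1) + z2 by rewrite addrAC e (addrC y1) addrK.
have hd2 : z1 - y1 \in L2.
  by rewrite -(addrK z2 (z1 - y1)) -ey2; apply: kD2 => //; apply: kN2.
have ey1 : y1 = z1 - (z1 - y1) by rewrite opprB addrC subrK.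
move: hd1 hd2 ey1 ey2; move: (z1 - y1) => d hd1 hd2 ey1 ey2.
rewrite ey1 ey2 /chi BDl !BDr !BNl (lagB h1 hz1 hd1) (lagB h2 hd2 hz2) Bself.
by rewrite add0r oppr0 !addr0.
Qed.

Lemma SW_term_eq L1 L2 a b : lag L1 -> lag L2 -> a \in L1 -> b \in L2 ->
  SW_term eta psi L1 L2 (a + b) = ch a b.
Proof.
move=> h1 h2 ha hb; rewrite /SW_term; case: pickP => [[p1 p2] /= /and3P [hp1 hp2 /eqP e] | none].
  by apply: (SW_wd h1 h2) => //; rewrite e.
by move: (none (a, b)); rewrite /= ha hb eqxx.
Qed.

Lemma ksub_memB M b x : ksub M -> b \in M -> (b - x \in M) = (x \in M).
Proof.
move=> hM hb; have [_ hD hN _] := hM; apply/idP/idP => h.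
- by rewrite -(opprK x); apply: hN; rewrite -(ksub_memD _ hM hb) addrC.
- by apply: hD => //; apply: hN.
Qed.

Lemma sum_pairs L1 L2 (G : WW -> algC) : lag L1 -> lag L2 ->
  \sum_(a in L1) \sum_(b in L2) G (a + b) = #|L1 :&: L2|%:R * \sum_(u in sumset L1 L2) G u.
Proof.
move=> h1 h2; have k1 := lag_ksub h1; have k2 := lag_ksub h2.
transitivity (\sum_(a in L1) \sum_(u in sumset L1 L2) (if u - a \in L2 then G u else 0)).
  apply: eq_bigr => a ha; rewrite -big_mkcondr (reindex_inj (addIr (-a))) /=.
  apply: eq_big => u.
  - apply/idP/idP => [h | /andP [_ h]] //; rewrite h andbT -(subrK a u) addrC.
    exact: mem_sumset.
  - by move=> _; rewrite addrC subrK.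
rewrite exchange_big /= big_distrr /=; apply: eq_bigr => u hu.
rewrite -big_mkcondr.
case/sumsetP: hu => a0 [b0 [ha0 hb0 eu]].
rewrite (reindex_inj (addIr a0)) /= (eq_bigl (fun x => x \in L1 :&: L2)); last first.
  move=> x; rewrite inE (ksub_memD _ k1 ha0) eu (addrC a0 b0) (addrC x a0) addrKA.
  by rewrite (ksub_memB _ k2 hb0).
by rewrite sumr_const mulr_natl.
Qed.

Definition T2 (f : WW -> algC) (w a b : WW) : algC :=
  (ch w (a + b))^* * ch a b * f (w + (a + b)).
Definition Y (f : WW -> algC) (w : WW) (L2 : {set WW}) (a : WW) : algC :=
  \sum_(b in L2) T2 f w a b.

Lemma d1 L L1 L2 f w : gm L2 L1 (gm L1 L f) w =
  (sqrtC ((#|L1| * #|L1 :&: L2|)%:R))^-1 * (sqrtC ((#|L| * #|L :&: L1|)%:R))^-1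
  * \sum_(a in L1) Y f w L2 a.
Proof.
rewrite /gamma -mulrA; congr (_ * _).
under eq_bigr do rewrite mulrCA.
rewrite -big_distrr /=; congr (_ * _).
under eq_bigr do rewrite big_distrr /=.
rewrite exchange_big /=; apply: eq_bigr => a ha; apply: eq_bigr => b hb.
rewrite /T2 chiDl (addrC a b) chiDr !rmorphM /= (chi_conj b a) addrA !mulrA.
done.
Qed.

Lemma Y_shift L L2 f w a d : lag L -> lag L2 -> EL L f -> d \in L :&: L2 ->
  Y f w L2 a = ch (a + a) d * Y f w L2 a.
Proof.
move=> hL h2 hf; rewrite inE => /andP [hdL hd2].
rewrite /Y big_distrr [LHS](reindex_inj (addIr d)) /=.
apply: eq_big => b; first by rewrite /= (ksub_memD _ (lag_ksub h2) hd2).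
move=> hb; have {hb} hb : b \in L2 by rewrite -(ksub_memD _ (lag_ksub h2) hd2).
rewrite /T2 (addrA a b d) (addrA w (a + b) d) (hf (w + (a + b)) d hdL).
rewrite (chiDr w (a + b) d) (chiDr a b d) (chiDl w (a + b) d) (chiDl a b d).
rewrite (chi0 (lagB h2 hb hd2)) mulr1 rmorphM /= chiDl !mulrA.
rewrite [LHS](ACl (2*5*1*3*4*6*7)) /= chiK mul1r.
by rewrite [LHS](ACl (3*4*1*2*5)) /=.
Qed.

Lemma shiftR L L2 f w a b : lag L -> lag L2 -> EL L f -> b \in L2 -> a + b \in L ->
  ch a b * \sum_(y in L2) (ch w y)^* * f (w + y) = Y f w L2 a.
Proof.
move=> hL h2 hf hb hab; rewrite /Y big_distrr [RHS](reindex_inj (addIr b)) /=.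
apply: eq_big => y; first by rewrite /= (ksub_memD _ (lag_ksub h2) hb).
move=> hy; rewrite /T2 (addrCA a y b) (addrA w y) (hf (w + y) (a + b) hab).
rewrite (chiDr w y (a + b)) (chiDr a y b) (chiDl w y (a + b)) (chiDr y a b) (chi0 (lagB h2 hy hb)) mulr1.
rewrite rmorphM /= -(chi_conj a y) !mulrA.
by rewrite [RHS](ACl (2*5*6*3*4*1*7)) /= chiK mul1r chiK mul1r.
Qed.

Lemma count_L2 L L2 a (c : algC) : lag L -> lag L2 ->
  \sum_(b in L2) (if a + b \in L then c else 0)
  = if a \in sumset L L2 then #|L :&: L2|%:R * c else 0.
Proof.
move=> hL h2; have kL := lag_ksub hL; have k2 := lag_ksub h2.
have [_ _ hN2 _] := k2.
case: ifP => [/sumsetP [l [y [hl hy ->]]] | hn].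
  rewrite -big_mkcondr (reindex_inj (addIr (-y))) /= (eq_bigl (fun x => x \in L :&: L2)).
    by rewrite sumr_const mulr_natl.
  move=> x; rewrite inE (ksub_memD _ k2 (hN2 _ hy)).
  by rewrite addrACA subrr addr0 addrC (ksub_memD _ kL hl) andbC.
rewrite big1 // => b hb; case: ifP => // hab.
have : a \in sumset L L2 by rewrite -(addrK b a); apply: mem_sumset => //; apply: hN2.
by rewrite hn.
Qed.

Lemma Y_zero L L2 f w a : lag L -> lag L2 -> EL L f -> a \notin sumset L L2 ->
  Y f w L2 a = 0.
Proof.
move=> hL h2 hf ha.
have kD := ksubI (lag_ksub hL) (lag_ksub h2).
have two : (2%:R : k) != 0 by move: k_odd; rewrite inE /=.
have Dn0 : (#|L :&: L2|%:R : algC) != 0.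
  by rewrite pnatr_eq0 -lt0n; apply/card_gt0P; exists 0; case: kD.
have : (#|L :&: L2|%:R : algC) * Y f w L2 a = 0.
  rewrite mulr_natl -sumr_const (eq_bigr (fun d => ch (a + a) d * Y f w L2 a)); last first.
    by move=> d hd; exact: (Y_shift _ _ hL h2 hf hd).
  rewrite -big_distrl /= char_sum //.
  case: ifP => [/forallP H | _]; last by rewrite mul0r.
  exfalso; move: ha; rewrite -orth_cap //; move/negP; apply.
  rewrite /orth inE; apply/forallP => d; apply/implyP => hd.
  have := implyP (H d) hd.
  by rewrite BDl -mulr2n -mulr_natl mulf_eq0 (negbTE two).
by move/eqP; rewrite mulf_eq0 (negbTE Dn0) => /eqP.
Qed.

Lemma fe_aux (F : fieldType) (sa sn sm sd : F) : sn != 0 -> sd != 0 ->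
 (sa * sn)^-1 * (sa * sm)^-1 = sn * (sd * sm * sa)^-1 * (sa * sd)^-1 * (sd * sd / (sn * sn)).
Proof.
move=> hn hd; rewrite !invfM !mulrA.
rewrite [RHS](AC 10 ((1*9)*(7*2)*(8*6)*(4*10*5*3))) /= !mulfV // !mul1r.
done.
Qed.

Lemma sqrtCVp (x : algC) : 0 <= x -> sqrtC (x^-1) = (sqrtC x)^-1.
Proof.
move=> hx0; case: (eqVneq x 0) => [->|hx]; first by rewrite invr0 sqrtC0 invr0.
have h : sqrtC x != 0 by rewrite sqrtC_eq0.
apply: (mulfI h); rewrite -sqrtCM ?nnegrE ?invr_ge0 // mulfV ?sqrtC1 ?divff //.
Qed.

Lemma const_eq (a n m d : nat) : (0 < n)%N -> (0 < d)%N ->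
  (sqrtC ((a * n)%:R))^-1 * (sqrtC ((a * m)%:R))^-1 =
  sqrtC (n%:R / (d * m * a)%:R : algC) * (sqrtC ((a * d)%:R))^-1 * (d%:R / n%:R).
Proof.
move=> hn hd.
have sM (x y : algC) : 0 <= x -> 0 <= y -> sqrtC (x * y) = sqrtC x * sqrtC y.
  by move=> hx hy; rewrite sqrtCM ?nnegrE.
rewrite !natrM !sM ?mulr_ge0 ?invr_ge0 ?ler0n //.
rewrite (sqrtCVp (x := (d%:R * m%:R * a%:R))); last by rewrite !mulr_ge0 ?ler0n.
rewrite !sM ?mulr_ge0 ?ler0n //.
rewrite -[(d%:R : algC) in X in _ = _ * X]sqrtCK -[(n%:R : algC) in X in _ = _ * (_ / X)]sqrtCK.
rewrite !expr2; apply: fe_aux; try by rewrite sqrtC_eq0 pnatr_eq0 -lt0n.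
by rewrite !mulr_ge0 ?ler0n.
Qed.

Lemma partD L L1 L2 f w : lag L -> lag L1 -> lag L2 -> EL L f ->
  gm L2 L1 (gm L1 L f) w = mu eta psi L2 L1 L * gm L2 L f w.
Proof.
move=> hL h1 h2 hf.
set R := \sum_(y in L2) (ch w y)^* * f (w + y).
have eX : \sum_(a in L1) Y f w L2 a =
    \sum_(a in L1) (if a \in sumset L L2 then Y f w L2 a else 0).
  apply: eq_bigr => a _; case: ifP => // /negbT; exact: Y_zero.
have eSW : #|L1 :&: L2|%:R * SW eta psi L L1 L2 =
    \sum_(a in L1) \sum_(b in L2) (if a + b \in L then ch a b else 0).
  transitivity (\sum_(a in L1) \sum_(b in L2)
     (if a + b \in L then SW_term eta psi L1 L2 (a + b) else 0)); last first.
    by apply: eq_bigr => a ha; apply: eq_bigr => b hb /=; rewrite SW_term_eq.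
  rewrite (sum_pairs (fun u => if u \in L then SW_term eta psi L1 L2 u else 0) h1 h2).
  congr (_ * _); rewrite /SW -big_mkcondr.
  by apply: eq_bigl => u; rewrite inE andbC.
have eRS : (\sum_(a in L1) \sum_(b in L2) (if a + b \in L then ch a b else 0)) * R =
    #|L :&: L2|%:R * \sum_(a in L1) (if a \in sumset L L2 then Y f w L2 a else 0).
  rewrite big_distrl big_distrr; apply: eq_bigr => a ha /=.
  rewrite big_distrl /= (eq_bigr (fun b => if a + b \in L then Y f w L2 a else 0)).
    by rewrite count_L2 //; case: ifP; rewrite ?mulr0.
  move=> b hb; case: ifP => hab; last by rewrite mul0r.
  exact: (@shiftR L L2 f w a b hL h2 hf hb hab).
have n12 : (#|L1 :&: L2|%:R : algC) != 0.
  by rewrite pnatr_eq0 -lt0n; apply/card_gt0P; exists 0; rewrite inE !lag0.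
have eSR : SW eta psi L L1 L2 * R =
    #|L :&: L2|%:R / #|L1 :&: L2|%:R * \sum_(a in L1) Y f w L2 a.
  apply: (mulfI n12); rewrite mulrA eSW eRS -eX [RHS]mulrA mulrCA mulfV // mulr1.
  done.
rewrite d1 /mu /gamma -/R.
rewrite [RHS]mulrC [RHS]mulrA [RHS](AC 4 ((3*1)*(4*2))) /= eSR [RHS]mulrA.
congr (_ * _).
rewrite (card_lag_eq h1 hL) (setIC L2 L1) (setIC L1 L).
apply: const_eq; apply/card_gt0P; exists 0; by rewrite inE !lag0.
Qed.

Lemma mu_one L L' : lag L -> lag L' -> mu eta psi L L' L = 1.
Proof.
move=> hL hL'; rewrite /mu /SW.
have -> : L :&: sumset L' L = L.
  apply/setIidPl/subsetP => z hz; rewrite -(add0r z); apply: mem_sumset => //.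
  exact: lag0.
rewrite (eq_bigr (fun _ => 1)); last first.
  move=> z hz; have := SW_term_eq hL' hL (lag0 hL') hz; rewrite add0r => ->.
  by rewrite chi0 // B0l.
rewrite sumr_const setIid (setIC L' L).
have an0 : (#|L|%:R : algC) != 0 by rewrite pnatr_eq0 -lt0n lag_pos.
have mn0 : (#|L :&: L'|%:R : algC) != 0.
  by rewrite pnatr_eq0 -lt0n; apply/card_gt0P; exists 0; rewrite inE !lag0.
have -> : (#|L :&: L'|%:R / (#|L| * #|L :&: L'| * #|L|)%:R : algC) = (#|L|%:R^-1)^+2.
  rewrite !natrM expr2 !invfM !mulrA [LHS](ACl ((1*3)*2*4)) /= mulfV // mul1r.
  done.
by rewrite sqrCK ?invr_ge0 ?ler0n // mulVf.
Qed.

Lemma equiv_gen (g gi : WW -> WW) L L' (f : WW -> algC) w :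
  (forall z, gi (g z) = z) -> (forall u v, gi (u + v) = gi u + gi v) ->
  (forall u z, BB (gi u) z = BB u (g z)) ->
  tau gi (gm L' L f) w = gm (g @: L') (g @: L) (tau gi f) w.
Proof.
move=> hK hD hB; have ginj : injective g := can_inj hK.
rewrite /tau /gamma -imsetI; last by move=> x y _ _; apply: ginj.
rewrite !card_imset //; congr (_ * _).
rewrite big_imset /=; last by move=> x y _ _; apply: ginj.
by apply: eq_bigr => z hz; rewrite hD hK /chi hB.
Qed.

Local Notation a1 := (@act1 _ _ S).
Local Notation a1i := (@act1inv _ _ star S).
Local Notation a2 := (@act2 _ _ star S).
Local Notation a2i := (@act2inv _ _ star S).

Lemma pairD (x1 y1 x2 y2 : S) : ((x1, y1) : WW) + (x2, y2) = (x1 + x2, y1 + y2).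
Proof. by []. Qed.

Lemma comb (x y x' y' : A) (s t : S) :
  x *: s + y *: t + (x' *: s + y' *: t) = (x + x') *: s + (y + y') *: t.
Proof. by rewrite addrACA -!scalerDl. Qed.

Lemma act1K g : SLstar star g -> forall z, a1i g (a1 g z) = z.
Proof.
rewrite /SLstar; set a := m11 g; set b := m12 g; set c := m21 g; set d := m22 g.
case=> h1 h2 h3 h4 [h5 h6] [s t].
have e1 : star d * a - star b * c = 1 by rewrite -star1 -h6 starB !starM !starK.
rewrite /act1inv /act1 /matL /= -/a -/b -/c -/d !scalerDr !scalerA !comb.
rewrite !mulNr e1 h4 subrr (addrC (- (star c * a))) h3 subrr (addrC (- (star c * b))) h6.
rewrite !scale0r !scale1r addr0; congr (_, _); exact: add0r.
Qed.

Lemma act1invD g u v : a1i g (u + v) = a1i g u + a1i g v.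
Proof. by case: u => s t; case: v => s' t'; rewrite /act1inv /matL /= !scalerDr; congr (_, _); apply: addrACA. Qed.

Lemma act1B g u z : BB (a1i g u) z = BB u (a1 g z).
Proof.
case: u => s t; case: z => x y; rewrite /B /act1inv /act1 /matL /=.
rewrite !etaDl !etaDr -!starN !eta_bal !scaleNr !etaNr.
rewrite !opprD !opprK !addrA.
by rewrite [LHS](ACl (3*1*4*2)) /=.
Qed.

Lemma act2E g w : a2 g w = (m22 g *: w.1 - m21 g *: w.2, - (m12 g *: w.1) + m11 g *: w.2).
Proof. by rewrite /act2 /matR !starN !starK !scaleNr. Qed.

Lemma act2K g : SLstar star g -> forall z, a2i g (a2 g z) = z.
Proof.
move=> hg z; rewrite act2E; move: hg; rewrite /SLstar.
set a := m11 g; set b := m12 g; set c := m21 g; set d := m22 g.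
case=> h1 h2 h3 h4 [h5 h6]; case: z => s t.
have e1 : star d * a - star b * c = 1 by rewrite -star1 -h6 starB !starM !starK.
rewrite /act2inv /matR /= -/a -/b -/c -/d -!scaleNr !scalerDr !scalerA !comb.
rewrite !mulrN h6 h3 addNr h4 subrr (addrC (- (star b * c))) e1.
rewrite !scale0r !scale1r addr0; congr (_, _); exact: add0r.
Qed.

Lemma act2invD g u v : a2i g (u + v) = a2i g u + a2i g v.
Proof. by case: u => s t; case: v => s' t'; rewrite /act2inv /matR /= !scalerDr; congr (_, _); apply: addrACA. Qed.

Lemma act2B g u z : BB (a2i g u) z = BB u (a2 g z).
Proof.
rewrite act2E; case: u => s t; case: z => x y; rewrite /B /act2inv /matR /=.
rewrite !etaDl !etaDr !eta_bal !etaNr.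
rewrite !opprD !opprK !addrA.
by rewrite [LHS](ACl (3*1*4*2)) /=.
Qed.

Lemma main_in :
  (forall L L' : {set W S}, lagrangian star eta L -> lagrangian star eta L' ->
     forall f, in_EL eta psi L f -> in_EL eta psi L' (gamma eta psi L' L f))
  /\ (forall L L' : {set W S}, lagrangian star eta L -> lagrangian star eta L' ->
     forall f h, in_EL eta psi L f -> in_EL eta psi L' h ->
       ip (gamma eta psi L' L f) h = ip f (gamma eta psi L L' h))
  /\ (forall L L' : {set W S}, lagrangian star eta L -> lagrangian star eta L' ->
     forall f h, in_EL eta psi L f -> in_EL eta psi L h ->
       ip (gamma eta psi L' L f) (gamma eta psi L' L h) = ip f h)
  /\ (forall L L' : {set W S}, lagrangian star eta L -> lagrangian star eta L' ->
     forall f, in_EL eta psi L f ->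
       (forall w, gamma eta psi L L' (gamma eta psi L' L f) w = gamma eta psi L L f w)
       /\ (forall w, gamma eta psi L L f w = f w))
  /\ (forall L L' L'' : {set W S},
     lagrangian star eta L -> lagrangian star eta L' -> lagrangian star eta L'' ->
     forall z1 z2 y1 y2 : W S, z1 \in L' -> z2 \in L'' -> y1 \in L' -> y2 \in L'' ->
       z1 + z2 = y1 + y2 -> chi eta psi z1 z2 = chi eta psi y1 y2)
  /\ (forall L L' L'' : {set W S},
     lagrangian star eta L -> lagrangian star eta L' -> lagrangian star eta L'' ->
     forall f, in_EL eta psi L f ->
     forall w, gamma eta psi L'' L' (gamma eta psi L' L f) w
               = mu eta psi L'' L' L * gamma eta psi L'' L f w)
  (* (e), for each of the two conventions for the action of G on W *)
  /\ equivariant star eta psi (@act1 _ _ S) (@act1inv _ _ star S)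
  /\ equivariant star eta psi (@act2 _ _ star S) (@act2inv _ _ star S).
Proof.
split; [| split; [| split; [| split; [| split; [| split; [| split]]]]]].
- by move=> L L' hL hL' f hf; apply: gamma_EL.
- by move=> L L' hL hL' f h hf hh; apply: partA.
- move=> L L' hL hL' f h hf hh.
  rewrite (partA hL hL' hf (gamma_EL _ _ hL')).
  by apply: ip_eqr => w; rewrite partD // mu_one // mul1r gamma_id.
- move=> L L' hL hL' f hf; split => w; last exact: gamma_id.
  by rewrite partD // mu_one // mul1r.
- move=> L L' L'' _ h1 h2 z1 z2 y1 y2 hz1 hz2 hy1 hy2 e.
  exact: (SW_wd h1 h2 hz1 hz2 hy1 hy2 e).
- by move=> L L' L'' hL h1 h2 f hf w; apply: partD.
- rewrite /equivariant => _ g hg L L' _ _ f _ w.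
  by apply: equiv_gen; [exact: act1K | exact: act1invD | exact: act1B].
- rewrite /equivariant => _ g hg L L' _ _ f _ w.
  by apply: equiv_gen; [exact: act2K | exact: act2invD | exact: act2B].
Qed.

End Dev.

Unset Implicit Arguments.
Set Strict Implicit.

Theorem mainTheorem3
  (k : finFieldType) (A : finAlgType k) (star : A -> A)
  (S : finLmodType A) (eta : S -> S -> k) (psi : k -> algC)
  (k_odd : ~~ (2 \in [pchar k]))
  (Hstar : is_involution star)
  (Heta : self_dual star eta)
  (Hpsi : nontrivial_character psi) :
  (* gamma_{L',L} maps E_L into E_{L'} *)
  (forall L L' : {set W S}, lagrangian star eta L -> lagrangian star eta L' ->
     forall f, in_EL eta psi L f -> in_EL eta psi L' (gamma eta psi L' L f))
  (* (a) *)
  /\ (forall L L' : {set W S}, lagrangian star eta L -> lagrangian star eta L' ->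
     forall f h, in_EL eta psi L f -> in_EL eta psi L' h ->
       ip (gamma eta psi L' L f) h = ip f (gamma eta psi L L' h))
  (* (b) *)
  /\ (forall L L' : {set W S}, lagrangian star eta L -> lagrangian star eta L' ->
     forall f h, in_EL eta psi L f -> in_EL eta psi L h ->
       ip (gamma eta psi L' L f) (gamma eta psi L' L h) = ip f h)
  (* (c) *)
  /\ (forall L L' : {set W S}, lagrangian star eta L -> lagrangian star eta L' ->
     forall f, in_EL eta psi L f ->
       (forall w, gamma eta psi L L' (gamma eta psi L' L f) w = gamma eta psi L L f w)
       /\ (forall w, gamma eta psi L L f w = f w))
  (* well-definedness of the summand of S_W(L; L', L'') *)
  /\ (forall L L' L'' : {set W S},
     lagrangian star eta L -> lagrangian star eta L' -> lagrangian star eta L'' ->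
     forall z1 z2 y1 y2 : W S, z1 \in L' -> z2 \in L'' -> y1 \in L' -> y2 \in L'' ->
       z1 + z2 = y1 + y2 -> chi eta psi z1 z2 = chi eta psi y1 y2)
  (* (d) *)
  /\ (forall L L' L'' : {set W S},
     lagrangian star eta L -> lagrangian star eta L' -> lagrangian star eta L'' ->
     forall f, in_EL eta psi L f ->
     forall w, gamma eta psi L'' L' (gamma eta psi L' L f) w
               = mu eta psi L'' L' L * gamma eta psi L'' L f w)
  (* (e), for each of the two conventions for the action of G on W *)
  /\ equivariant star eta psi (@act1 _ _ S) (@act1inv _ _ star S)
  /\ equivariant star eta psi (@act2 _ _ star S) (@act2inv _ _ star S).
Proof. exact: (@main_in k A star S eta psi k_odd Hstar Heta Hpsi). Qed.
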